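(* Let $(f_k)_{k\in\mathbb Z}$ be the probability mass function of a sum of $m$ independent Bernoulli variables with parameters $p_1,\ldots,p_m$, and for each $j$ let $(f^{(j)}_k)_{k\in\mathbb Z}$ be the mass function of the sum omitting the $j$-th variable (all extended by $0$ outside their supports). Then for every $k\in\mathbb Z$ and every integer $q\ge1$, $$qf_kf_{k-q}=\sum_{j=1}^mp_j(1-p_j)\left[f^{(j)}_{k-1}f^{(j)}_{k-q}-f^{(j)}_kf^{(j)}_{k-q-1}\right].$$ *)

(* Defs.v *)
From HB Require Import structures.
From mathcomp Require Import all_boot all_order all_algebra.
Set Implicit Arguments. Unset Strict Implicit. Unset Printing Implicit Defensive.
Import Order.TTheory GRing.Theory Num.Theory.
Local Open Scope ring_scope.

(* Probability mass function, at k : int, of the sum of the independent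
   Bernoulli variables X_i ~ Bernoulli(p i) for i ranging over the index set A:
   P(sum_{i in A} X_i = k) = sum over subsets S of A with |S| = k of
   prod_{i in S} p i * prod_{i in A \ S} (1 - p i).
   It is 0 for k < 0 or k > #|A| automatically (empty sum). *)
Definition pb_pmf (R : nzRingType) (m : nat) (A : {set 'I_m}) (p : 'I_m -> R)
  (k : int) : R :=
  \sum_(S in powerset A | (#|S|%:Z == k)%R)
     (\prod_(i in S) p i) * (\prod_(i in A :\: S) (1 - p i)).

(* Main.v *)
Require Import Defs.
From HB Require Import structures.
From mathcomp Require Import all_boot all_order all_algebra ring zify.
Import Order.TTheory GRing.Theory Num.Theory.
Local Open Scope ring_scope.

Lemma pb_rec (R : realFieldType) (m : nat) (p : 'I_m -> R) (A : {set 'I_m})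
  (i : 'I_m) (k : int) : i \in A ->
  pb_pmf A p k = p i * pb_pmf (A :\ i) p (k - 1) + (1 - p i) * pb_pmf (A :\ i) p k.
Proof.
move=> iA; rewrite /pb_pmf (bigID (fun S : {set 'I_m} => i \in S)) /=.
congr (_ + _).
  rewrite (reindex_onto (fun T => i |: T) (fun S => S :\ i)) /=; last first.
    by move=> S /andP[_ iS]; rewrite setD1K.
  rewrite mulr_sumr; apply: eq_big.
    move=> T; rewrite setU11 andbT.
    have -> : ((i |: T) :\ i == T) = (i \notin T).
      apply/eqP/idP => [<-|iT]; first by rewrite !inE eqxx.
      apply/setP => x; rewrite !inE; case: eqP => // ->; by rewrite (negbTE iT).
    case iT: (i \in T); rewrite ?andbF //= ?andbT.
      have -> : (T \in powerset (A :\ i)) = false.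
        by apply/negbTE; rewrite powersetE; apply/negP => /subsetP /(_ i iT); rewrite !inE eqxx.
      by [].
    rewrite cardsU1 iT /= !powersetE.
    have -> : (i |: T \subset A) = (T \subset A :\ i).
      apply/idP/idP => H.
        apply/subsetP => x xT; rewrite !inE; apply/andP; split.
          by apply/eqP => exi; rewrite exi iT in xT.
        by apply: (subsetP H); rewrite !inE xT orbT.
      apply/subsetP => x; rewrite !inE => /orP[/eqP->//|xT].
      by have := subsetP H x xT; rewrite !inE => /andP[].
    congr (_ && _); apply/eqP/eqP; lia.
  move=> T /andP[_ /eqP iT].
  have iT' : i \notin T by rewrite -iT !inE eqxx.
  rewrite big_setU1 //= -setDDl; ring.
rewrite mulr_sumr; apply: eq_big.
  move=> S; rewrite !powersetE andbAC; congr (_ && _).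
  apply/andP/idP => [[H iS]|H].
    apply/subsetP => x xS; rewrite !inE; apply/andP; split.
      by apply/eqP => exi; rewrite -exi xS in iS.
    exact: (subsetP H).
  split; last by apply/negP => /(subsetP H); rewrite !inE eqxx.
  by apply/subsetP => x /(subsetP H); rewrite !inE => /andP[].

move=> S /andP[_ iS].
have -> : A :\: S = i |: (A :\ i :\: S).
  apply/setP => x; rewrite !inE; case: (eqVneq x i) => [->|] //=.
  by rewrite iA (negbTE iS).
rewrite big_setU1 /=; last by rewrite !inE eqxx /= andbF.
by rewrite mulrCA.
Qed.

Lemma pb0 (R : realFieldType) (m : nat) (p : 'I_m -> R) (k : int) :
  pb_pmf set0 p k = if k == 0 then 1 else 0.
Proof.
rewrite /pb_pmf powerset0 big_mkcondr big_set1 cards0 setD0 !big_set0 mulr1.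
by rewrite eq_sym.
Qed.

Lemma pb_main (R : realFieldType) (m : nat) (p : 'I_m -> R) (n : nat) :
  forall (A : {set 'I_m}), #|A| = n -> forall k l : int,
  (k - l)%:~R * pb_pmf A p k * pb_pmf A p l =
  \sum_(j in A) p j * (1 - p j) *
     (pb_pmf (A :\ j) p (k - 1) * pb_pmf (A :\ j) p l
      - pb_pmf (A :\ j) p k * pb_pmf (A :\ j) p (l - 1)).
Proof.
elim: n => [|n IH] A cA k l.
  move/cards0_eq: cA => ->; rewrite big_set0 !pb0.
  case: eqVneq => [->|]; case: eqVneq => [->|] //=.
  all: try by move=> *; rewrite ?subrr ?mulr0 ?mul0r ?mulr1.
have [i iA] : exists i, i \in A.
  by apply/set0Pn; rewrite -card_gt0 cA.
have cA' : #|A :\ i| = n by move: cA; rewrite (cardsD1 i A) iA add1n => -[].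
rewrite (bigD1 i) //=.
have E : \sum_(j in A | j != i) p j * (1 - p j) *
     (pb_pmf (A :\ j) p (k - 1) * pb_pmf (A :\ j) p l
      - pb_pmf (A :\ j) p k * pb_pmf (A :\ j) p (l - 1)) =
  (p i * p i) * ((k - 1 - (l - 1))%:~R * pb_pmf (A :\ i) p (k - 1) * pb_pmf (A :\ i) p (l - 1))
  + (p i * (1 - p i)) * ((k - 1 - l)%:~R * pb_pmf (A :\ i) p (k - 1) * pb_pmf (A :\ i) p l)
  + (p i * (1 - p i)) * ((k - (l - 1))%:~R * pb_pmf (A :\ i) p k * pb_pmf (A :\ i) p (l - 1))
  + ((1 - p i) * (1 - p i)) * ((k - l)%:~R * pb_pmf (A :\ i) p k * pb_pmf (A :\ i) p l).
  rewrite !IH //.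
  rewrite !mulr_sumr -!big_split /=.
  apply: eq_big => [j|j /andP[jA ji]]; first by rewrite !inE andbC.
  have jAi : i \in A :\ j by rewrite !inE eq_sym ji.
  rewrite !(@pb_rec _ _ p _ i _ jAi).
  have -> : A :\ j :\ i = A :\ i :\ j.
    by apply/setP => x; rewrite !inE; case: (x == i); case: (x == j); rewrite ?andbF.
  ring.
rewrite E (@pb_rec _ _ p _ i k iA) (@pb_rec _ _ p _ i l iA) !intrB.
ring.
Qed.

Theorem lemmaA1 (R : realFieldType) (m : nat) (p : 'I_m -> R)
  (hp : forall j, 0 <= p j <= 1) (k : int) (q : nat) (hq : (1 <= q)%N) :
  let f := pb_pmf [set: 'I_m] p in
  let fj := fun j : 'I_m => pb_pmf ([set: 'I_m] :\ j) p in
  q%:R * f k * f (k - q%:Z) =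
  \sum_(j < m) p j * (1 - p j) *
     (fj j (k - 1) * fj j (k - q%:Z) - fj j k * fj j (k - q%:Z - 1)).
Proof.
move=> f fj.
have -> : q%:R = (k - (k - q%:Z))%:~R :> R.
  by rewrite opprB addrC subrK.
rewrite /f (@pb_main _ _ p _ _ (erefl _)).
by apply: eq_bigl => j; rewrite in_setT.
Qed.
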